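(* For every $n\geq 3$, no quantum behavior for the $n$-cycle scenario is strongly contextual.
   Context: The $n$-cycle scenario has measurements $M_1,\dots,M_n$ with outcomes in $\{0,1\}$ and contexts $\{M_i,M_{i+1}\}$, indices mod $n$. A behavior is a family of probability distributions $p_i$ on $\{0,1\}^2$, $p_i(x,y)$ being the probability that $M_i=x$, $M_{i+1}=y$. It is quantum if there exist a complex separable Hilbert space $\mathcal{H}$, a density operator $\rho$ on $\mathcal{H}$, and for each $i$ orthogonal projectors $P_{i;0},P_{i;1}$ with $P_{i;0}+P_{i;1}=\mathbb{I}$, such that $P_{i;o}$ and $P_{i+1;o'}$ commute for all $i,o,o'$ and $p_i(x,y)=\mathrm{Tr}(P_{i;x}P_{i+1;y}\rho)$. The behavior is strongly contextual if there is no $t\in\{0,1\}^n$ with $p_i(t_i,t_{i+1})>0$ for all $i$. *)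

(* Defs.v *)
(* complex numbers C = R[i] over an abstract model R of the reals
   (R : realType, i.e. a complete archimedean ordered field, which is isomorphic
   to the usual reals). *)
From HB Require Import structures.
From mathcomp Require Import all_boot all_order all_algebra.
From mathcomp Require Import reals.
From mathcomp Require Import complex.
Set Implicit Arguments. Unset Strict Implicit. Unset Printing Implicit Defensive.
Import Order.TTheory GRing.Theory Num.Theory.
Local Open Scope ring_scope.
Local Open Scope complex_scope.

Section Hilbert.
Variable R : realType.
Local Notation C := (R[i]).
Variable H : lmodType C.
(* inner product, antilinear in the first and linear in the second argument *)
Variable ip : H -> H -> C.

Definition nsq (x : H) : R := complex.Re (ip x x).

Definition inner_product : Prop :=
  [/\ (forall (a : C) (x y z : H), ip x (a *: y + z) = a * ip x y + ip x z),
      (forall x y : H, ip y x = (ip x y)^*),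
      (forall x : H, 0 <= ip x x) &
      (forall x : H, ip x x = 0 -> x = 0)].

Definition complete_ip : Prop :=
  forall u : nat -> H,
    (forall eps : R, 0 < eps -> exists N : nat, forall m k : nat,
        (N <= m)%N -> (N <= k)%N -> nsq (u m - u k) < eps) ->
    exists x : H, forall eps : R, 0 < eps -> exists N : nat, forall m : nat,
        (N <= m)%N -> nsq (u m - x) < eps.

Definition separable_ip : Prop :=
  exists d : nat -> H, forall (x : H) (eps : R), 0 < eps ->
    exists k : nat, nsq (x - d k) < eps.

Definition separable_hilbert : Prop :=
  [/\ inner_product, complete_ip & separable_ip].

Definition linear_op (A : H -> H) : Prop :=
  forall (a : C) (x y : H), A (a *: x + y) = a *: A x + A y.

Definition bounded_op (A : H -> H) : Prop :=
  exists M : R, forall x : H, nsq (A x) <= M * nsq x.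

Definition self_adjoint (A : H -> H) : Prop :=
  forall x y : H, ip (A x) y = ip x (A y).

Definition orth_projector (P : H -> H) : Prop :=
  [/\ linear_op P, bounded_op P, (forall x, P (P x) = P x) & self_adjoint P].

(* orthonormal basis, indexed by nat; to cover finite dimension, entries may be
   the zero vector ("padding"); the nonzero entries form a maximal
   orthonormal family (= Hilbert basis). *)
Definition orthonormal_basis (e : nat -> H) : Prop :=
  [/\ (forall k, e k = 0 \/ ip (e k) (e k) = 1),
      (forall j k, j <> k -> ip (e j) (e k) = 0) &
      (forall x : H, (forall k, ip (e k) x = 0) -> x = 0)].

Definition series_to (f : nat -> C) (t : C) : Prop :=
  forall eps : R, 0 < eps -> exists N : nat, forall m : nat,
    (N <= m)%N -> `|\sum_(k < m) f k - t| < eps%:C.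

Definition trace_is (e : nat -> H) (A : H -> H) (t : C) : Prop :=
  series_to (fun k => ip (e k) (A (e k))) t.

(* density operator: bounded linear positive operator, trace class with trace 1
   (for a positive operator, the trace sum is basis independent) *)
Definition density_op (e : nat -> H) (rho : H -> H) : Prop :=
  [/\ linear_op rho, bounded_op rho, (forall x, 0 <= ip x (rho x))
    & trace_is e rho 1].

End Hilbert.

(* measurements M_0, ..., M_(n-1) indexed by 'I_n, outcomes in bool = {0,1}
   (false = 0, true = 1); the successor i+1 mod n is [ordS i]. *)

(* a behavior: p i x y = probability that M_i = x and M_(i+1) = y *)
Definition behavior (R : realType) (n : nat) (p : 'I_n -> bool -> bool -> R) : Prop :=
  forall i : 'I_n, (forall x y, 0 <= p i x y) /\
    p i false false + p i false true + p i true false + p i true true = 1.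

Definition quantum_behavior (R : realType) (n : nat)
    (p : 'I_n -> bool -> bool -> R) : Prop :=
  behavior p /\
  exists (H : lmodType (R[i])) (ip : H -> H -> R[i]) (e : nat -> H)
         (rho : H -> H) (P : 'I_n -> bool -> H -> H),
    [/\ separable_hilbert ip,
        orthonormal_basis ip e,
        density_op ip e rho &
        (forall i : 'I_n,
         [/\ (forall o, orth_projector ip (P i o)),
             (forall x, P i false x + P i true x = x),
             (forall o o' x, P i o (P (ordS i) o' x) = P (ordS i) o' (P i o x)) &
             (forall x y, trace_is ip e (fun v => P i x (P (ordS i) y (rho v)))
                                    ((p i x y)%:C)%C)])].

Definition strongly_contextual (R : realType) (n : nat)
    (p : 'I_n -> bool -> bool -> R) : Prop :=
  ~ exists t : 'I_n -> bool, forall i : 'I_n, 0 < p i (t i) (t (ordS i)).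

(* Main.v *)
Require Import Defs.
From HB Require Import structures.
From mathcomp Require Import all_boot all_order all_algebra.
From mathcomp Require Import reals complex.
From mathcomp Require Import classical_sets.
From mathcomp Require Import ring lra zify.
From Stdlib Require Import Classical.
Set Implicit Arguments. Unset Strict Implicit. Unset Printing Implicit Defensive.
Import Order.TTheory GRing.Theory Num.Theory.

Local Open Scope ring_scope.
Local Open Scope complex_scope.

Section NZ.
Variable R : realType.
Local Notation C := R[i].
Definition nz (c : C) : R := complex.Re c ^+ 2 + complex.Im c ^+ 2.
Lemma nz_ge0 c : 0 <= nz c.
Proof. by rewrite /nz addr_ge0 // sqr_ge0. Qed.
Lemma nz_Re c : complex.Re c ^+ 2 <= nz c.
Proof. by rewrite /nz lerDl sqr_ge0. Qed.
Lemma nz_Im c : complex.Im c ^+ 2 <= nz c.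
Proof. by rewrite /nz lerDr sqr_ge0. Qed.
Lemma nz_eq0 c : nz c = 0 -> c = 0.
Proof.
case: c => a b; rewrite /nz /= => h.
have ha : a ^+ 2 = 0 by apply/eqP; rewrite eq_le sqr_ge0 andbT -h lerDl sqr_ge0.
have hb : b ^+ 2 = 0 by move: h; rewrite ha add0r.
by move/eqP: ha; rewrite sqrf_eq0 => /eqP ->; move/eqP: hb; rewrite sqrf_eq0 => /eqP ->.
Qed.
Lemma mulcJ c : c * (conjc c) = (nz c)%:C.
Proof. case: c => a b; rewrite /nz /=; simpc. congr (_ +i* _); ring. Qed.
Lemma mulJc c : (conjc c) * c = (nz c)%:C.
Proof. by rewrite mulrC mulcJ. Qed.
Lemma le0c_real (z : C) : 0 <= z -> z = (complex.Re z)%:C.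
Proof. case: z => a b; rewrite lecE /= => /andP [/eqP -> _]. by []. Qed.
Lemma nzM a b : nz (a * b) = nz a * nz b.
Proof. case: a => a1 a2; case: b => b1 b2; rewrite /nz /=. ring. Qed.
Lemma nzJ a : nz ((conjc a)) = nz a.
Proof. case: a => a1 a2; rewrite /nz /=. ring. Qed.
Lemma nzR (r : R) : nz r%:C = r ^+ 2.
Proof. by rewrite /nz /= expr0n /= addr0. Qed.
Lemma cjD (a b : C) : conjc (a + b) = conjc a + conjc b.
Proof. exact: rmorphD. Qed.
Lemma cjN (a : C) : conjc (- a) = - conjc a.
Proof. exact: rmorphN. Qed.
Lemma cjB (a b : C) : conjc (a - b) = conjc a - conjc b.
Proof. exact: rmorphB. Qed.
Lemma cjM (a b : C) : conjc (a * b) = conjc a * conjc b.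
Proof. exact: rmorphM. Qed.
Lemma cjV (a : C) : conjc (a^-1) = (conjc a)^-1.
Proof. exact: conjc_inv. Qed.
Lemma cjK (a : C) : conjc (conjc a) = a.
Proof. exact: conjcK. Qed.
Lemma cj0 : conjc (0 : C) = 0.
Proof. exact: conjc0. Qed.
Lemma cjR (r : R) : conjc (r%:C) = r%:C.
Proof. exact: conjc_real. Qed.
Lemma cj_sum (I : Type) (r : seq I) (P : pred I) (F : I -> C) :
  conjc (\sum_(i <- r | P i) F i) = \sum_(i <- r | P i) conjc (F i).
Proof. elim/big_rec2: _ => [|i y1 y2 _ <-]; [exact: cj0 | exact: cjD]. Qed.
Lemma nzD a b : nz (a + b) <= 2 * nz a + 2 * nz b.
Proof.
case: a => a1 a2; case: b => b1 b2; rewrite /nz /=.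
have h1 := sqr_ge0 (a1 - b1); have h2 := sqr_ge0 (a2 - b2).
rewrite -subr_ge0; apply: (le_trans (addr_ge0 h1 h2)); rewrite le_eqVlt; apply/orP; left; apply/eqP; ring.
Qed.
End NZ.

Local Open Scope ring_scope.
Local Open Scope complex_scope.

Section IP.
Variable R : realType.
Local Notation C := R[i].
Variable H : lmodType C.
Variable ip : H -> H -> C.
Hypothesis hip : inner_product ip.

Lemma ipC x y : ip y x = conjc (ip x y).
Proof. by case: hip. Qed.
Lemma ip_lin a x y z : ip x (a *: y + z) = a * ip x y + ip x z.
Proof. by case: hip. Qed.
Lemma ipDr x y z : ip x (y + z) = ip x y + ip x z.
Proof. by have := ip_lin 1 x y z; rewrite scale1r mul1r. Qed.
Lemma ip0r x : ip x 0 = 0.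
Proof. have h := ipDr x 0 0; rewrite addr0 in h. by apply: (addrI (ip x 0)); rewrite addr0 -h. Qed.
Lemma ipZr a x y : ip x (a *: y) = a * ip x y.
Proof. by rewrite -[a *: y]addr0 ip_lin ip0r addr0. Qed.
Lemma ipDl x y z : ip (y + z) x = ip y x + ip z x.
Proof. by rewrite ipC ipDr cjD -!ipC. Qed.
Lemma ipZl a x y : ip (a *: y) x = (conjc a) * ip y x.
Proof. by rewrite ipC ipZr cjM -ipC. Qed.
Lemma ip0l x : ip 0 x = 0.
Proof. by rewrite ipC ip0r conjc0. Qed.
Lemma ipNr x y : ip x (- y) = - ip x y.
Proof. by rewrite -scaleN1r ipZr mulN1r. Qed.
Lemma ipNl x y : ip (- y) x = - ip y x.
Proof. by rewrite ipC ipNr cjN -ipC. Qed.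
Lemma ipBr x y z : ip x (y - z) = ip x y - ip x z.
Proof. by rewrite ipDr ipNr. Qed.
Lemma ipBl x y z : ip (y - z) x = ip y x - ip z x.
Proof. by rewrite ipDl ipNl. Qed.
Lemma ip_sumr x (I : Type) (r : seq I) (P : pred I) (F : I -> H) :
  ip x (\sum_(i <- r | P i) F i) = \sum_(i <- r | P i) ip x (F i).
Proof.
elim/big_rec2: _ => [|i y1 y2 _ <-]; first exact: ip0r.
by rewrite ipDr.
Qed.
Lemma ip_suml x (I : Type) (r : seq I) (P : pred I) (F : I -> H) :
  ip (\sum_(i <- r | P i) F i) x = \sum_(i <- r | P i) ip (F i) x.
Proof.
elim/big_rec2: _ => [|i y1 y2 _ <-]; first exact: ip0l.
by rewrite ipDl.
Qed.
Lemma ip_ge0 x : 0 <= ip x x.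
Proof. by case: hip. Qed.
Lemma ip_real x : ip x x = (nsq ip x)%:C.
Proof. exact: le0c_real (ip_ge0 x). Qed.
Lemma nsq_ge0 x : 0 <= nsq ip x.
Proof. by rewrite -lecR -ip_real ip_ge0. Qed.
Lemma nsq_eq0 x : nsq ip x = 0 -> x = 0.
Proof. by move=> h; case: hip => _ _ _; apply; rewrite ip_real h. Qed.
Lemma nsqN x : nsq ip (- x) = nsq ip x.
Proof. by rewrite /nsq ipNl ipNr opprK. Qed.
Lemma nsqB x y : nsq ip (x - y) = nsq ip (y - x).
Proof. by rewrite -nsqN opprB. Qed.

Lemma CS u w : nz (ip u w) <= nsq ip u * nsq ip w.
Proof.
have [h0|hpos] := eqVneq (nsq ip u) 0.
  by rewrite (nsq_eq0 h0) ip0l /nsq ip0l /nz /= expr0n /= addr0 mul0r.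
have ha : 0 < nsq ip u by rewrite lt0r hpos nsq_ge0.
set c := ip u w; set a := nsq ip u.
set lam := c / a%:C.
have h := ip_ge0 (w - lam *: u).
rewrite ipBl !ipBr !ipZl !ipZr (ipC u w) -/c (ip_real u) (ip_real w) -/a in h.
have hlam : (conjc lam) = (conjc c) / a%:C by rewrite /lam cjM cjV cjR.
rewrite hlam /lam in h.
have haC : a%:C != 0 by rewrite eq_complex /= negb_and hpos.
have e : forall b, b - c / a%:C * (conjc c) - ((conjc c) / a%:C * c - (conjc c) / a%:C * (c / a%:C * a%:C))
   = b - c * (conjc c) / a%:C by move=> b; field.
rewrite e subr_ge0 mulcJ -rmorphV /= ?unitfE // -rmorphM lecR in h.
by move: h; rewrite ler_pdivrMr // mulrC.
Qed.
End IP.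

Local Open Scope ring_scope.
Local Open Scope complex_scope.

Lemma sum_nat_delta (V : nmodType) (a m j : nat) (X : V) :
  \sum_(a <= k < m) (if k == j then X else 0) = if (a <= j < m)%N then X else 0.
Proof.
elim: m => [|m IH]; first by rewrite big_geq // ltn0 andbF.
case: (leqP a m) => h.
  rewrite big_nat_recr //= IH; case: (ltngtP j m) => hj.
  - by rewrite ltnS (ltnW hj) addr0.
  - by rewrite ltnS (leqNgt j m) hj andbF addr0.
  - by rewrite andbF add0r hj ltnSn h.
rewrite big_geq //; case: ifP => // /andP [h1 h2].
by move: (leq_ltn_trans h1 h2); rewrite ltnS leqNgt h.
Qed.

Lemma le_eps_eq0 (R : realType) (r : R) : 0 <= r -> (forall eps, 0 < eps -> r <= eps) -> r = 0.
Proof.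
move=> h0 h; apply/eqP; rewrite eq_le h0 andbT.
case: (ltrP 0 r) => // hr.
by have := h (r / 2) ltac:(by rewrite divr_gt0); lra.
Qed.

Section Basis.
Variable R : realType.
Local Notation C := R[i].
Variable H : lmodType C.
Variable ip : H -> H -> C.
Hypothesis hip : inner_product ip.
Variable e : nat -> H.
Hypothesis hbasis : orthonormal_basis ip e.
Hypothesis hcomp : complete_ip ip.

Definition cf (x : H) (k : nat) : C := ip (e k) x.
Definition W (b : nat -> C) (a m : nat) : H := \sum_(a <= k < m) b k *: e k.
Definition Q (N : nat) (x : H) : H := W (cf x) 0 N.

Lemma ee j k : ip (e j) (e k) = if k == j then ip (e k) (e k) else 0.
Proof.
case: (eqVneq k j) => [->//|h].
by case: hbasis => _ h2 _; apply: h2; move=> hh; rewrite hh eqxx in h.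
Qed.

Lemma delta01 k : ip (e k) (e k) = 0 \/ ip (e k) (e k) = 1.
Proof. by case: hbasis => h _ _; case: (h k) => ->; [left; rewrite ip0r|right]. Qed.

Lemma cf_delta x k : cf x k * ip (e k) (e k) = cf x k.
Proof.
by case: hbasis => h _ _; case: (h k) => h'; rewrite /cf ?h' ?(ip0l hip) ?mul0r ?mulr1.
Qed.

Lemma nsq_e k : nsq ip (e k) <= 1.
Proof. by rewrite /nsq; case: (delta01 k) => -> /=. Qed.

Lemma W1 b a m j : ip (e j) (W b a m) = if (a <= j < m)%N then b j * ip (e j) (e j) else 0.
Proof.
rewrite /W (ip_sumr hip).
under eq_bigr do rewrite (ipZr hip) ee (fun_if (fun t => b _ * t)) mulr0.
rewrite -sum_nat_delta; apply: eq_bigr => k _.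
by case: (eqVneq k j) => [->|].
Qed.

Lemma W2 b a m y : ip (W b a m) y = \sum_(a <= k < m) conjc (b k) * ip (e k) y.
Proof. by rewrite /W (ip_suml hip); under eq_bigr do rewrite (ipZl hip). Qed.

Lemma W3 b a m y : ip y (W b a m) = \sum_(a <= k < m) b k * ip y (e k).
Proof. by rewrite /W (ip_sumr hip); under eq_bigr do rewrite (ipZr hip). Qed.

Definition SQ x a m : R := \sum_(a <= k < m) nz (cf x k).

Lemma SQ_ge0 x a m : 0 <= SQ x a m.
Proof. by rewrite /SQ sumr_ge0 // => k _; exact: nz_ge0. Qed.

Lemma sumC (a m : nat) (F : nat -> R) : (\sum_(a <= k < m) F k)%:C = \sum_(a <= k < m) (F k)%:C.
Proof. exact: rmorph_sum. Qed.

Lemma WW x a m : ip (W (cf x) a m) (W (cf x) a m) = (SQ x a m)%:C.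
Proof.
rewrite W2 /SQ sumC; apply: eq_big_nat => k hk.
by rewrite W1 hk cf_delta mulJc.
Qed.

Lemma Wx x a m : ip (W (cf x) a m) x = (SQ x a m)%:C.
Proof. by rewrite W2 /SQ sumC; apply: eq_bigr => k _; rewrite mulJc. Qed.

Lemma xW x a m : ip x (W (cf x) a m) = (SQ x a m)%:C.
Proof.
rewrite W3 /SQ sumC; apply: eq_bigr => k _.
by rewrite (ipC hip) mulcJ.
Qed.

Lemma nsqW x a m : nsq ip (W (cf x) a m) = SQ x a m.
Proof. by rewrite /nsq WW. Qed.

Lemma bessel x a m : SQ x a m <= nsq ip x.
Proof.
have h := ip_ge0 hip (x - W (cf x) a m).
rewrite (ipBl hip) !(ipBr hip) WW Wx xW (ip_real hip x) subrr subr0 -rmorphB lecR in h.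
by rewrite -subr_ge0.
Qed.

Lemma QB x k m : (k <= m)%N -> Q m x - Q k x = W (cf x) k m.
Proof.
by move=> h; rewrite /Q /W (@big_cat_nat _ _ _ k 0 m _ _ (leq0n k) h) /= addrC addrK.
Qed.

Lemma SQ_split x k m : (k <= m)%N -> SQ x 0 m = SQ x 0 k + SQ x k m.
Proof. by move=> h; rewrite /SQ (@big_cat_nat _ _ _ k 0 m _ _ (leq0n k) h). Qed.

Lemma Q_cauchy x : forall eps : R, 0 < eps -> exists N : nat, forall m k : nat,
        (N <= m)%N -> (N <= k)%N -> nsq ip (Q m x - Q k x) < eps.
Proof.
move=> eps heps.
pose E := fun r : R => exists m, r = SQ x 0 m.
have hE : has_sup E.
  split; first by exists (SQ x 0 0), 0%N.
  exists (nsq ip x) => r [m ->]; exact: bessel.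
have [r [N0 ->] hN0] := sup_adherent heps hE.
have ub : forall m, SQ x 0 m <= sup E by move=> m; apply: sup_upper_bound => //; exists m.
have key : forall m k, (N0 <= k)%N -> (k <= m)%N -> nsq ip (Q m x - Q k x) < eps.
  move=> m k h1 h2; rewrite QB // nsqW.
  have := SQ_split x h2; have := SQ_split x h1; have := SQ_split x (leq_trans h1 h2).
  have := SQ_ge0 x N0 k; have := ub m. lra.
exists N0 => m k hm hk.
case: (leqP k m) => h; first exact: key.
by rewrite (nsqB hip); apply: key => //; apply: ltnW.
Qed.

Lemma PV x : forall eps : R, 0 < eps -> exists N : nat, forall m : nat,
        (N <= m)%N -> nsq ip (Q m x - x) < eps.
Proof.
have [z hz] := hcomp (Q_cauchy x).
suff hxz : x = z.
  move=> eps heps; have [N hN] := hz eps heps; exists N => m hm.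
  by rewrite {2}hxz; exact: hN.
have hk : forall k, ip (e k) (x - z) = 0.
  move=> k; apply: nz_eq0; apply: le_eps_eq0; first exact: nz_ge0.
  move=> eps heps; have [N hN] := hz eps heps.
  pose m := maxn N k.+1.
  have hxm : x - z = (x - Q m x) + (Q m x - z) by rewrite addrA subrK.
  have h0 : ip (e k) (x - Q m x) = 0.
    have hkm : (k < m)%N by rewrite leq_max ltnSn orbT.
    by rewrite (ipBr hip) /Q W1 /= hkm cf_delta /cf subrr.
  rewrite hxm (ipDr hip) h0 add0r.
  apply: (le_trans (CS hip _ _)).
  have h1 := nsq_e k; have h2 := hN m (leq_maxl _ _); have h3 := nsq_ge0 hip (Q m x - z).
  have h4 := nsq_ge0 hip (e k).
  nra.
case: hbasis => _ _ hmax.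
by apply/eqP; rewrite -subr_eq0; apply/eqP; apply: hmax.
Qed.

End Basis.

Local Open Scope ring_scope.
Local Open Scope complex_scope.

Section Conv.
Variable R : realType.
Local Notation C := R[i].

Definition conv (a : nat -> R) (l : R) := forall eps : R, 0 < eps ->
  exists N : nat, forall m : nat, (N <= m)%N -> `|a m - l| < eps.

Lemma abs_lt_sq (x eps : R) : 0 < eps -> x ^+ 2 < eps ^+ 2 -> `|x| < eps.
Proof.
move=> he h; rewrite -sqrtr_sqr -[eps in _ < eps]gtr0_norm // -sqrtr_sqr.
by rewrite ltr_sqrt // exprn_gt0.
Qed.

Lemma conv_sq (a : nat -> R) l :
  (forall eps : R, 0 < eps -> exists N : nat, forall m : nat, (N <= m)%N -> (a m - l) ^+ 2 < eps) ->
  conv a l.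
Proof.
move=> h eps he; have [N hN] := h (eps ^+ 2) (exprn_gt0 _ he).
by exists N => m hm; apply: abs_lt_sq => //; apply: hN.
Qed.

Lemma conv_ext (a b : nat -> R) l : (forall m, a m = b m) -> conv a l -> conv b l.
Proof. by move=> e h eps he; have [N hN] := h eps he; exists N => m hm; rewrite -e; apply: hN. Qed.

Lemma conv_const l : conv (fun _ => l) l.
Proof. by move=> eps he; exists 0%N => m _; rewrite subrr normr0. Qed.

Lemma conv_add a b la lb : conv a la -> conv b lb -> conv (fun m => a m + b m) (la + lb).
Proof.
move=> ha hb eps he.
have he2 : 0 < eps / 2 by rewrite divr_gt0.
have [N1 h1] := ha _ he2; have [N2 h2] := hb _ he2.
exists (maxn N1 N2) => m hm.
have := h1 m (leq_trans (leq_maxl _ _) hm); have := h2 m (leq_trans (leq_maxr _ _) hm).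
have e : a m + b m - (la + lb) = (a m - la) + (b m - lb) by ring.
rewrite e => u v; apply: (le_lt_trans (ler_normD _ _)); lra.
Qed.

Lemma conv_scale c a l : conv a l -> conv (fun m => c * a m) (c * l).
Proof.
move=> ha eps he.
have hc : 0 < `|c| + 1 by rewrite ltr_wpDl.
have [N h] := ha (eps / (`|c| + 1)) (divr_gt0 he hc).
exists N => m hm; have := h m hm.
rewrite -mulrBr normrM => u.
apply: (le_lt_trans (y := (`|c| + 1) * `|a m - l|)).
  by rewrite ler_wpM2r // lerDl.
by rewrite mulrC -ltr_pdivlMr.
Qed.

Lemma conv_sum (I : Type) (r : seq I) (F : I -> nat -> R) (G : I -> R) :
  (forall i, conv (F i) (G i)) ->
  conv (fun m => \sum_(i <- r) F i m) (\sum_(i <- r) G i).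
Proof.
move=> h; elim: r => [|i r IH].
  by rewrite big_nil; apply: (conv_ext _ (conv_const 0)) => m; rewrite big_nil.
by rewrite big_cons; apply: (conv_ext _ (conv_add (h i) IH)) => m; rewrite big_cons.
Qed.

Lemma conv_le a l c K : conv a l -> (forall m, (K <= m)%N -> c <= a m) -> c <= l.
Proof.
move=> ha hc; case: (lerP c l) => // hlt.
have he : 0 < c - l by rewrite subr_gt0.
have [N hN] := ha _ he.
have := hN (maxn N K) (leq_maxl _ _); have := hc (maxn N K) (leq_maxr _ _).
move=> u v; have := ler_norm (a (maxn N K) - l). lra.
Qed.

Lemma conv_ge a l c K : conv a l -> (forall m, (K <= m)%N -> a m <= c) -> l <= c.
Proof.
move=> ha hc; case: (lerP l c) => // hlt.
have he : 0 < l - c by rewrite subr_gt0.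
have [N hN] := ha _ he.
have := hN (maxn N K) (leq_maxl _ _); have := hc (maxn N K) (leq_maxr _ _).
move=> u v.
have := ler_norm (l - a (maxn N K)); rewrite distrC. lra.
Qed.

Definition convC (a : nat -> C) (l : C) :=
  conv (fun m => complex.Re (a m)) (complex.Re l) /\ conv (fun m => complex.Im (a m)) (complex.Im l).

Lemma convC_ext (a b : nat -> C) l : (forall m, a m = b m) -> convC a l -> convC b l.
Proof. by move=> e [h1 h2]; split; [apply: (conv_ext _ h1) | apply: (conv_ext _ h2)] => m; rewrite e. Qed.

Lemma convC_add a b la lb : convC a la -> convC b lb -> convC (fun m => a m + b m) (la + lb).
Proof.
case=> h1 h2 [h3 h4]; split.
  by rewrite raddfD; apply: (conv_ext _ (conv_add h1 h3)) => m; rewrite raddfD.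
by rewrite raddfD; apply: (conv_ext _ (conv_add h2 h4)) => m; rewrite raddfD.
Qed.

Lemma ReM (c z : C) : complex.Re (c * z) = complex.Re c * complex.Re z - complex.Im c * complex.Im z.
Proof. by case: c; case: z. Qed.
Lemma ImM (c z : C) : complex.Im (c * z) = complex.Re c * complex.Im z + complex.Im c * complex.Re z.
Proof. by case: c; case: z. Qed.

Lemma convC_scale c a l : convC a l -> convC (fun m => c * a m) (c * l).
Proof.
case=> h1 h2; split.
  rewrite ReM -mulNr; apply: (conv_ext _ (conv_add (conv_scale (complex.Re c) h1) (conv_scale (- complex.Im c) h2))).
  by move=> m; rewrite ReM mulNr.
rewrite ImM; apply: (conv_ext _ (conv_add (conv_scale (complex.Re c) h2) (conv_scale (complex.Im c) h1))).
by move=> m; rewrite ImM.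
Qed.

Lemma convC_const l : convC (fun _ => l) l.
Proof. by split; exact: conv_const. Qed.

Lemma convC_sum (I : Type) (r : seq I) (F : I -> nat -> C) (G : I -> C) :
  (forall i, convC (F i) (G i)) ->
  convC (fun m => \sum_(i <- r) F i m) (\sum_(i <- r) G i).
Proof.
move=> h; elim: r => [|i r IH].
  by rewrite big_nil; apply: (convC_ext _ (convC_const 0)) => m; rewrite big_nil.
by rewrite big_cons; apply: (convC_ext _ (convC_add (h i) IH)) => m; rewrite big_cons.
Qed.

Lemma convC_nz (a : nat -> C) l :
  (forall eps : R, 0 < eps -> exists N : nat, forall m : nat, (N <= m)%N -> nz (a m - l) < eps) ->
  convC a l.
Proof.
move=> h; split; apply: conv_sq => eps he; have [N hN] := h eps he;
  exists N => m hm; have := hN m hm.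
  have := nz_Re (a m - l); rewrite raddfB /=; lra.
have := nz_Im (a m - l); rewrite raddfB /=; lra.
Qed.

Lemma series_convC (f : nat -> C) t : series_to f t ->
  convC (fun m => \sum_(k < m) f k) t.
Proof.
move=> h; apply: convC_nz => eps he.
have hs : 0 < Num.sqrt eps by rewrite sqrtr_gt0.
have [N hN] := h _ hs; exists N => m hm; have := hN m hm.
rewrite normc_def ltcR.
by rewrite ltr_sqrt.
Qed.

End Conv.

Local Open Scope ring_scope.
Local Open Scope complex_scope.

Section Lin.
Variable R : realType.
Local Notation C := R[i].
Variable H : lmodType C.
Variable L : H -> H.
Hypothesis hL : linear_op L.
Lemma linD x y : L (x + y) = L x + L y.
Proof. by have := hL 1 x y; rewrite !scale1r. Qed.
Lemma lin0 : L 0 = 0.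
Proof. have h := linD 0 0; rewrite addr0 in h. by apply: (addrI (L 0)); rewrite addr0 -h. Qed.
Lemma linZ a x : L (a *: x) = a *: L x.
Proof. by have := hL a x 0; rewrite !addr0 lin0 addr0. Qed.
Lemma linN x : L (- x) = - L x.
Proof. by rewrite -scaleN1r linZ scaleN1r. Qed.
Lemma linB x y : L (x - y) = L x - L y.
Proof. by rewrite linD linN. Qed.
Lemma lin_sum (I : Type) (r : seq I) (P : pred I) (F : I -> H) :
  L (\sum_(i <- r | P i) F i) = \sum_(i <- r | P i) L (F i).
Proof. elim/big_rec2: _ => [|i y1 y2 _ <-]; [exact: lin0 | exact: linD]. Qed.
End Lin.

Lemma Re_conj (R : realType) (z : R[i]) : complex.Re (conjc z) = complex.Re z.
Proof. by case: z. Qed.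

Lemma ReD (R : realType) (a b : R[i]) : complex.Re (a + b) = complex.Re a + complex.Re b.
Proof. by case: a; case: b. Qed.
Lemma ReB (R : realType) (a b : R[i]) : complex.Re (a - b) = complex.Re a - complex.Re b.
Proof. by case: a; case: b. Qed.
Lemma Re_sum (R : realType) (I : Type) (r : seq I) (P : pred I) (F : I -> R[i]) :
  complex.Re (\sum_(i <- r | P i) F i) = \sum_(i <- r | P i) complex.Re (F i).
Proof. elim/big_rec2: _ => [//|i y1 y2 _ <-]; exact: ReD. Qed.

Lemma Re_ge0 (R : realType) (z : R[i]) : 0 <= z -> 0 <= complex.Re z.
Proof. by case: z => a b; rewrite lecE /= => /andP [_ ->]. Qed.

Lemma sum_ord_le (R : realType) (F : nat -> R) K L : (K <= L)%N -> (forall k, 0 <= F k) ->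
  \sum_(k < K) F k <= \sum_(k < L) F k.
Proof.
move=> h hF; rewrite -!(big_mkord xpredT) (@big_cat_nat _ _ _ K 0 L _ _ (leq0n K) h) /=.
by rewrite lerDl sumr_ge0.
Qed.

Lemma term_le_sum (R : realType) (F : nat -> R) j L : (j < L)%N -> (forall k, 0 <= F k) ->
  F j <= \sum_(k < L) F k.
Proof.
move=> h hF; rewrite -(big_mkord xpredT) (@big_cat_nat _ _ _ j 0 L _ _ (leq0n j) (ltnW h)) /=.
rewrite [X in _ <= _ + X]big_ltn //= addrA ler_wpDr ?sumr_ge0 // ler_wpDl ?sumr_ge0 //.
Qed.

Local Open Scope ring_scope.
Local Open Scope complex_scope.

Section Rho.
Variable R : realType.
Local Notation C := R[i].
Variable H : lmodType C.
Variable ip : H -> H -> C.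
Hypothesis hip : inner_product ip.
Variable rho : H -> H.
Hypothesis hlin : linear_op rho.
Hypothesis hpos : forall x, 0 <= ip x (rho x).

Lemma herm x y : ip x (rho y) = conjc (ip y (rho x)).
Proof.
have h1 := hpos (x + y); have h2 := hpos (x + 'i *: y).
rewrite !(linD hlin) !(linZ hlin) !(ipDl hip) !(ipDr hip) !(ipZl hip) !(ipZr hip) in h1 h2.
rewrite (le0c_real (hpos x)) (le0c_real (hpos y)) in h1 h2.
move: h1 h2; set a := ip x (rho y); set b := ip y (rho x).
case: a => a1 a2; case: b => b1 b2.
rewrite !lecE /=. simpc. rewrite /= => /andP [/eqP e1 _] /andP [/eqP e2 _].
apply/eqP; rewrite eq_complex /=; apply/andP; split; apply/eqP; lra.
Qed.

Lemma fm_Re_zero z w : ip z (rho z) = 0 -> complex.Re (ip z (rho w)) = 0.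
Proof.
move=> hz.
have hq := hpos w.
have key : forall t : R, 0 <= 2 * t * complex.Re (ip z (rho w)) + t ^+ 2 * complex.Re (ip w (rho w)).
  move=> t; have h := hpos (z + t%:C *: w).
  rewrite !(linD hlin) !(linZ hlin) !(ipDl hip) !(ipDr hip) !(ipZl hip) !(ipZr hip) in h.
  rewrite hz (herm w z) cjR (le0c_real hq) in h.
  move: h; set c := ip z (rho w); case: c => c1 c2.
  rewrite lecE /=; simpc; rewrite /= => h.
  nra.
set s := complex.Re (ip z (rho w)); set q := complex.Re (ip w (rho w)).
have hq0 : 0 <= q by apply: Re_ge0.
have hq1 : q + 1 != 0 by rewrite gt_eqF // ltr_wpDl.
have := key (- s / (q + 1)).
have -> : 2 * (- s / (q + 1)) * s + (- s / (q + 1)) ^+ 2 * q = - (s ^+ 2 * (q + 2)) / (q + 1) ^+ 2.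
  by field.
rewrite pmulr_lge0 ?invr_gt0 ?exprn_gt0 ?ltr_wpDl // oppr_ge0 => h.
have : s ^+ 2 <= 0.
  by rewrite -(pmulr_lle0 _ (ltr_wpDl hq0 (ltr0Sn _ 1))).
by rewrite le_eqVlt ltNge sqr_ge0 orbF sqrf_eq0 => /eqP.
Qed.

Lemma fm_zero z w : ip z (rho z) = 0 -> ip z (rho w) = 0.
Proof.
move=> hz; have h1 := fm_Re_zero w hz; have h2 := fm_Re_zero ('i *: w) hz.
rewrite (linZ hlin) (ipZr hip) in h2.
move: h1 h2; case: (ip z (rho w)) => a b /= -> ; simpc => /= h2.
by move/eqP: h2; rewrite oppr_eq0 => /eqP ->.
Qed.
End Rho.

Local Open Scope ring_scope.
Local Open Scope complex_scope.

Section Key.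
Variable R : realType.
Local Notation C := R[i].
Variable H : lmodType C.
Variable ip : H -> H -> C.
Hypothesis hip : inner_product ip.
Variable e : nat -> H.
Hypothesis hbasis : orthonormal_basis ip e.
Hypothesis hcomp : complete_ip ip.
Variable rho : H -> H.
Hypothesis hlin : linear_op rho.
Hypothesis hbnd : bounded_op ip rho.
Hypothesis hpos : forall x, 0 <= ip x (rho x).
Hypothesis htr1 : trace_is ip e rho 1.

Local Notation Q := (Q ip e).
Local Notation cf := (cf ip e).

Lemma bnd : exists M, 0 <= M /\ forall x, nsq ip (rho x) <= M * nsq ip x.
Proof.
case: hbnd => M hM; exists `|M|; split => // x.
by apply: (le_trans (hM x)); rewrite ler_wpM2r ?nsq_ge0 ?ler_norm.
Qed.

Lemma nsqQ N y : nsq ip (Q N y) <= nsq ip y.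
Proof. by rewrite /Q (nsqW hip hbasis) (bessel hip hbasis). Qed.

Lemma L2 y : conv (fun N => complex.Re (ip (Q N y) (rho (Q N y)))) (complex.Re (ip y (rho y))).
Proof.
have [M [hM0 hM]] := bnd.
suff : convC (fun N => ip (Q N y) (rho (Q N y))) (ip y (rho y)) by case.
apply: convC_nz => eps he.
set K := 4 * M * nsq ip y + 1.
have hy := nsq_ge0 hip y.
have hK : 0 < K by rewrite /K ltr_wpDl // !mulr_ge0.
have [N hN] := PV hip hbasis hcomp y (divr_gt0 he hK).
exists N => m hm; set d := Q m y - y.
have e1 : ip (Q m y) (rho (Q m y)) - ip y (rho y) = ip d (rho (Q m y)) + ip y (rho d).
  rewrite /d (ipBl hip) (linB hlin) (ipBr hip); ring.
rewrite e1; apply: (le_lt_trans (nzD _ _)).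
have c1 := CS hip d (rho (Q m y)); have c2 := CS hip y (rho d).
have b1 := hM (Q m y); have b2 := hM d; have q1 := nsqQ m y.
have hd := nsq_ge0 hip d; have hd' := hN m hm.
have hr1 := nsq_ge0 hip (rho (Q m y)); have hQ := nsq_ge0 hip (Q m y).
rewrite -/d in hd'.
have : nsq ip d * K < eps by rewrite -ltr_pdivlMr.
rewrite /K => hdK.
have t1 : nsq ip d * nsq ip (rho (Q m y)) <= nsq ip d * (M * nsq ip y).
  by apply: ler_wpM2l => //; apply: (le_trans b1); apply: ler_wpM2l.
have t2 : nsq ip y * nsq ip (rho d) <= nsq ip y * (M * nsq ip d).
  by apply: ler_wpM2l.
nra.
Qed.

Lemma PS x y : convC (fun L => ip (Q L x) y) (ip x y).
Proof.
apply: convC_nz => eps he.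
have hy := nsq_ge0 hip y.
have hK : 0 < nsq ip y + 1 by rewrite ltr_wpDl.
have [N hN] := PV hip hbasis hcomp x (divr_gt0 he hK).
exists N => m hm.
rewrite -(ipBl hip); apply: (le_lt_trans (CS hip _ _)).
have := hN m hm; rewrite ltr_pdivlMr // => h.
have := nsq_ge0 hip (Q m x - x). nra.
Qed.

Lemma fmW b b' N : ip (W e b 0 N) (rho (W e b' 0 N)) =
  \sum_(0 <= i < N) \sum_(0 <= j < N) conjc (b i) * (b' j * ip (e i) (rho (e j))).
Proof.
rewrite (W2 hip); apply: eq_bigr => i _.
rewrite /W (lin_sum hlin) (ip_sumr hip) mulr_sumr; apply: eq_bigr => j _.
by rewrite (linZ hlin) (ipZr hip).
Qed.

Lemma fm_delta i : ip (e i) (rho (e i)) * ip (e i) (e i) = ip (e i) (rho (e i)).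
Proof.
case: hbasis => h _ _; case: (h i) => ->; last by rewrite mulr1.
by rewrite !(ip0l hip) mul0r.
Qed.

Lemma partial_le1 N : \sum_(i < N) complex.Re (ip (e i) (rho (e i))) <= 1.
Proof.
have [h1 _] := series_convC htr1.
have -> : (1 : R) = complex.Re 1 by [].
apply: (conv_le (K := N) h1) => m hm.
rewrite Re_sum; apply: (sum_ord_le (F := fun k => complex.Re (ip (e k) (rho (e k))))) => // k.
exact: Re_ge0.
Qed.

Section U.
Variable U : H -> H.
Hypothesis hU : linear_op U.
Hypothesis hUU : forall x, U (U x) = x.
Hypothesis hUs : forall x y, ip (U x) y = ip x (U y).

Lemma L1 K : \sum_(k < K) complex.Re (ip (U (e k)) (rho (U (e k)))) <= 1.
Proof.
pose f k := U (e k).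
have stepa : conv (fun N => \sum_(k < K) complex.Re (ip (Q N (f k)) (rho (Q N (f k)))))
                  (\sum_(k < K) complex.Re (ip (f k) (rho (f k)))).
  by apply: conv_sum => k; apply: L2.
apply: (conv_ge (K := 0) stepa) => N _.
apply: le_trans (partial_le1 N).
have b1 : forall L, \sum_(k < L) ip (Q N (f k)) (rho (Q N (f k))) =
   \sum_(0 <= i < N) \sum_(0 <= j < N) ip (e i) (rho (e j)) *
        (\sum_(k < L) conjc (cf (f k) i) * cf (f k) j).
  move=> L; under eq_bigr do rewrite /Q fmW.
  rewrite exchange_big; apply: eq_bigr => i _.
  rewrite exchange_big; apply: eq_bigr => j _.
  rewrite mulr_sumr; apply: eq_bigr => k _; ring.
have b2 : forall L i j, \sum_(k < L) conjc (cf (f k) i) * cf (f k) j = ip (Q L (U (e j))) (U (e i)).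
  move=> L i j; rewrite /Q (W2 hip) big_mkord; apply: eq_bigr => k _.
  by rewrite /cf /f -(ipC hip (e i) (U (e k))) hUs -(hUs (e j)) (ipC hip (e k) (U (e j))) mulrC.
have b3 : convC (fun L => \sum_(k < L) ip (Q N (f k)) (rho (Q N (f k))))
                (\sum_(0 <= i < N) ip (e i) (rho (e i))).
  apply: (convC_ext (fun L => esym (b1 L))).
  have -> : \sum_(0 <= i < N) ip (e i) (rho (e i)) =
            \sum_(0 <= i < N) \sum_(0 <= j < N) ip (e i) (rho (e j)) * ip (e j) (e i).
    apply: eq_big_nat => i /andP [_ hi].
    under eq_bigr do rewrite (ee hbasis) (fun_if (fun t => ip (e i) (rho (e _)) * t)) mulr0.
    have := sum_nat_delta 0 N i (ip (e i) (rho (e i)) * ip (e i) (e i)).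
    rewrite leq0n hi /= fm_delta => <-; apply: eq_bigr => j _.
    by rewrite eq_sym; case: (eqVneq i j) => [<-|//]; rewrite fm_delta.
  apply: convC_sum => i; apply: convC_sum => j; apply: convC_scale.
  apply: (convC_ext (fun L => esym (b2 L i j))).
  have := PS (U (e j)) (U (e i)); rewrite hUs hUU; by [].
have [b4 _] := b3.
rewrite big_mkord in b4.
have -> : \sum_(i < N) complex.Re (ip (e i) (rho (e i))) = complex.Re (\sum_(i < N) ip (e i) (rho (e i))).
  by rewrite Re_sum.
apply: (conv_le (K := K) b4) => L hL.
rewrite Re_sum; apply: (sum_ord_le (F := fun k => complex.Re (ip (Q N (f k)) (rho (Q N (f k)))))) => // k.
exact: Re_ge0.
Qed.
End U.


Lemma key (A : H -> H) : linear_op A -> (forall x, A (A x) = A x) -> self_adjoint ip A ->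
  trace_is ip e (fun v => A (rho v)) 0 -> forall v, A (rho v) = 0.
Proof.
move=> hA hAA hAs htrA.
pose U x := A x + A x - x.
have hAU : forall x, A (U x) = A x.
  by move=> x; rewrite /U (linB hA) (linD hA) hAA addrK.
have hUU : forall x, U (U x) = x.
  move=> x; have -> : U (U x) = A (U x) + A (U x) - U x by [].
  by rewrite hAU /U opprB addrC subrK.
have hUs : forall x y, ip (U x) y = ip x (U y).
  by move=> x y; rewrite /U (ipBl hip) (ipDl hip) !hAs (ipBr hip) (ipDr hip).
have ident : forall x, complex.Re (ip (U x) (rho (U x))) =
   4 * complex.Re (ip (A x) (rho (A x))) - 4 * complex.Re (ip (A x) (rho x)) + complex.Re (ip x (rho x)).
  move=> x; rewrite /U (linB hlin) (linD hlin) (ipBl hip) (ipDl hip) !(ipBr hip) !(ipDr hip).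
  rewrite (herm hip hlin hpos x (A x)).
  case: (ip (A x) (rho (A x))) => a1 a2; case: (ip (A x) (rho x)) => b1 b2; case: (ip x (rho x)) => c1 c2 /=. lra.
have [trA _] := series_convC htrA.
have [tr1 _] := series_convC htr1.
have hg : forall k0, complex.Re (ip (A (e k0)) (rho (A (e k0)))) = 0.
  move=> k0; apply: le_eps_eq0; first exact: Re_ge0.
  move=> eps he.
  have he5 : 0 < eps / 5 by rewrite divr_gt0.
  have [N1 hN1] := trA _ he5; have [N2 hN2] := tr1 _ he5.
  pose K := maxn (maxn N1 N2) k0.+1.
  have hK1 : (N1 <= K)%N by rewrite /K !leq_max leqnn.
  have hK2 : (N2 <= K)%N by rewrite /K !leq_max leqnn orbT.
  have hK3 : (k0 < K)%N by rewrite /K leq_max leqnn orbT.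
  have h1 := hN1 K hK1; have h2 := hN2 K hK2.
  have hL1 : \sum_(k < K) complex.Re (ip (U (e k)) (rho (U (e k)))) <= 1 := L1 hUU hUs K.
  rewrite (eq_bigr _ (fun (k : 'I_K) _ => ident (e k))) !big_split /= sumrN -!mulr_sumr in hL1.
  rewrite Re_sum subr0 in h1; rewrite Re_sum in h2.
  have e1 : \sum_(k < K) complex.Re (ip (e k) (A (rho (e k)))) =
            \sum_(k < K) complex.Re (ip (A (e k)) (rho (e k))).
    by apply: eq_bigr => k _; rewrite hAs.
  rewrite e1 in h1.
  have hle := term_le_sum (F := fun k => complex.Re (ip (A (e k)) (rho (A (e k))))) hK3
                 (fun k => Re_ge0 (hpos _)).
  move: h1 h2; rewrite !ltr_norml => /andP [h1a h1b] /andP [h2a h2b].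
  have : complex.Re (1 : C) = 1 by [].
  lra.
move=> v.
case: hbasis => _ _ hmax; apply: hmax => k.
rewrite -hAs.
apply: (fm_zero hip hlin hpos).
by rewrite (le0c_real (hpos _)) hg.
Qed.
End Key.

Local Open Scope ring_scope.

Section Comb.
Variable R : realType.
Variable H : lmodType (R[i]).
Variable n : nat.
Hypothesis hn : (0 < n)%N.
Variable rho : H -> H.
Variable P : 'I_n -> bool -> H -> H.
Variable p : 'I_n -> bool -> bool -> R.
Hypothesis hPlin : forall i o, linear_op (P i o).
Hypothesis hsum : forall i x, P i false x + P i true x = x.
Hypothesis hcomm : forall i o o' x, P i o (P (ordS i) o' x) = P (ordS i) o' (P i o x).
Hypothesis hidem : forall i o x, P i o (P i o x) = P i o x.
Hypothesis hposs : forall i x y, (exists v, P i x (P (ordS i) y (rho v)) <> 0) -> 0 < p i x y.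
Hypothesis hrho : exists v, rho v <> 0.

Definition F i x v := P i x (rho v).
Definition E i x y v := P i x (P (ordS i) y (rho v)).
Definition NZ (f : H -> H) := exists v, f v <> 0.

Lemma notNZ f : ~ NZ f -> forall v, f v = 0.
Proof. by move=> h v; apply: NNPP => hv; apply: h; exists v. Qed.

Lemma f1 i x v : F i x v = E i x false v + E i x true v.
Proof. by rewrite /E -(linD (hPlin i x)) hsum. Qed.

Lemma f2 i y v : F (ordS i) y v = E i false y v + E i true y v.
Proof. by rewrite /E hsum. Qed.

Lemma NZ_E_F i x y : NZ (E i x y) -> NZ (F (ordS i) y).
Proof.
move=> [v hv]; apply: NNPP => h; apply: hv.
by rewrite /E -/(F (ordS i) y v) (notNZ h) (lin0 (hPlin _ _)).
Qed.

Lemma NZ_F_E i x : NZ (F i x) -> exists y, NZ (E i x y).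
Proof.
move=> [v hv]; apply: NNPP => h; apply: hv.
rewrite f1.
have h0 : forall y, ~ NZ (E i x y) by move=> y hy; apply: h; exists y.
by rewrite (notNZ (h0 false)) (notNZ (h0 true)) addr0.
Qed.

Lemma bool_neq (x t : bool) : x != t -> x = ~~ t.
Proof. by case: x; case: t. Qed.

Lemma bool_sum4 (G : bool -> bool -> H) t y : G (~~t) y = 0 -> G t (~~y) = 0 ->
  G false y + G true y = G t false + G t true.
Proof. by case: t; case: y => /= -> ->; rewrite ?addr0 ?add0r. Qed.

Lemma bool_sum2 (G : bool -> H) y : G y = 0 -> G (~~y) = 0 -> G false + G true = 0.
Proof. by case: y => /= -> ->; rewrite addr0. Qed.

Definition good i := exists y, NZ (F (ordS i) y) /\ forall x, NZ (F i x) -> NZ (E i x y).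
Definition notgood := forall i, ~ good i.

Lemma tied i t y : notgood -> NZ (F i t) -> NZ (E i t y) -> forall v, F (ordS i) y v = F i t v.
Proof.
move=> hng hF hE.
have hFy := NZ_E_F hE.
have ex : forall y', NZ (F (ordS i) y') -> exists x, NZ (F i x) /\ ~ NZ (E i x y').
  move=> y' hy'; apply: NNPP => hc; apply: (hng i); exists y'; split => // x hx.
  by apply: NNPP => hx'; apply: hc; exists x.
have [x [hx1 hx2]] := ex y hFy.
have hxt : x = ~~ t.
  by case: (eqVneq x t) => [ht|/bool_neq //]; subst x; case: (hx2 hE).
subst x.
have h2 : ~ NZ (E i t (~~ y)).
  move=> hE2; have [x' [hx'1 hx'2]] := ex (~~ y) (NZ_E_F hE2).
  have hx't : x' = ~~ t.
    by case: (eqVneq x' t) => [ht|/bool_neq //]; subst x'; case: (hx'2 hE2).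
  subst x'; move: hx1 => [w hw]; apply: hw; rewrite f1.
  move: hx2 hx'2 => /notNZ h3 /notNZ h4.
  exact: (bool_sum2 (G := fun b => E i (~~ t) b w) (h3 w) (h4 w)).
move=> v; rewrite f2 f1.
move: hx2 h2 => /notNZ h3 /notNZ h4.
exact: (bool_sum4 (G := fun a b => E i a b v) (h3 v) (h4 v)).
Qed.


Local Open Scope nat_scope.
Definition idx (j : nat) : 'I_n := Ordinal (ltn_pmod j hn).

Lemma modS (x : nat) : (x %% n).+1 %% n = x.+1 %% n.
Proof. by rewrite -[((x %% n).+1)%N]addn1 modnDml addn1. Qed.

Lemma ordS_idx j : ordS (idx j) = idx j.+1.
Proof. by apply: val_inj; rewrite /= modS. Qed.

Lemma walk s a : NZ (F (idx s) a) -> forall k, exists u : nat -> bool,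
  [/\ u s = a,
      (forall j, (j < k)%N -> NZ (E (idx (s + j)) (u (s + j)) (u (s + j).+1))),
      NZ (F (idx (s + k)) (u (s + k))) &
      (notgood -> forall v, F (idx (s + k)) (u (s + k)) v = F (idx s) a v)].
Proof.
move=> ha; elim=> [|k [u [hu1 hu2 hu3 hu4]]].
  by exists (fun _ => a); split => //; rewrite addn0.
set m := s + k.
have [y hy] := NZ_F_E hu3.
exists (fun q => if q == m.+1 then y else u q); split.
- by have -> : (s == m.+1) = false by apply/eqP; rewrite /m; lia.
- move=> j hj; case: (ltngtP j k) => hjk.
  + have -> : (s + j == m.+1) = false by apply/eqP; rewrite /m; lia.
    have -> : ((s + j).+1 == m.+1) = false by apply/eqP; rewrite /m; lia.
    exact: hu2.
  + by move: hj; rewrite ltnS leqNgt hjk.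
  + subst j; rewrite -/m.
    have -> : (m == m.+1) = false by apply/eqP; lia.
    by rewrite eqxx.
- rewrite addnS -/m eqxx.
  by have := NZ_E_F hy; rewrite ordS_idx.
- move=> hng v; rewrite addnS -/m eqxx -ordS_idx.
  by rewrite (tied hng hu3 hy) hu4.
Qed.

Definition off s (i : 'I_n) : nat := (i + (n - s %% n)) %% n.

Lemma off_lt s i : (off s i < n)%N.
Proof. exact: ltn_pmod. Qed.

Lemma idx_off s i : idx (s + off s i) = i.
Proof.
apply: val_inj; rewrite /= /off modnDmr.
rewrite {1}(divn_eq s n) -addnA.
have hr := ltn_pmod s hn.
have -> : s %% n + (i + (n - s %% n)) = i + n by move: hr; generalize (s %% n); lia.
by rewrite modnMDl modnDr modn_small.
Qed.

Lemma off_S s i : off s (ordS i) = (off s i).+1 %% n.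
Proof.
by rewrite /off /= modnDml addSn modS.
Qed.

Lemma closing s (u : nat -> bool) :
  (forall j, (j < n.-1)%N -> NZ (E (idx (s + j)) (u (s + j)) (u (s + j).+1))) ->
  NZ (E (idx (s + n.-1)) (u (s + n.-1)) (u s)) ->
  exists t : 'I_n -> bool, forall i, (0 < p i (t i) (t (ordS i)))%R.
Proof.
move=> hw hc; exists (fun i => u (s + off s i)) => i.
apply: hposs.
have hi := idx_off s i.
have hlt := off_lt s i.
case: (ltnP (off s i) n.-1) => hj.
  have := hw _ hj; rewrite hi off_S modn_small; last by lia.
  by rewrite addnS.
have hj' : off s i = n.-1 by lia.
move: hc; rewrite -hj' hi off_S hj'.
have -> : (n.-1).+1 = n by lia.
by rewrite modnn addn0.
Qed.

Lemma comb : exists t : 'I_n -> bool, forall i, (0 < p i (t i) (t (ordS i)))%R.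
Proof.
case: (classic (exists i, good i)) => [[e [y [hy hgood]]]|hng].
  pose s := (val e).+1.
  have hs : idx s = ordS e by apply: val_inj.
  have [u [hu1 hu2 hu3 _]] := walk (a := y) (s := s) ltac:(by rewrite hs) n.-1.
  apply: (closing hu2).
  have he : idx (s + n.-1) = e.
    apply: val_inj; rewrite /= /s.
    have -> : (e.+1 + n.-1 = e + n)%N by lia.
    by rewrite modnDr modn_small.
  by rewrite hu1; rewrite he in hu3 *; apply: hgood.
have hng' : notgood by move=> i hi; apply: hng; exists i.
have [v hv] := hrho.
have [a ha] : exists a, NZ (F (idx 0) a).
  apply: NNPP => h; apply: hv.
  have h0 : forall a, ~ NZ (F (idx 0) a) by move=> a ha; apply: h; exists a.
  by rewrite -(hsum (idx 0) (rho v)) -!/(F _ _ v) (notNZ (h0 false)) (notNZ (h0 true)) addr0.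
have [u [hu1 hu2 hu3 hu4]] := walk ha n.-1.
apply: (closing hu2).
rewrite hu1 add0n; rewrite add0n in hu3 hu4.
set i := idx n.-1; set t := u n.-1.
have hSi : ordS i = idx 0.
  by rewrite /i ordS_idx; apply: val_inj; rewrite /= prednK // modnn mod0n.
have [w hw] := ha; exists w.
rewrite /E hcomm hSi -/(F i t w) (hu4 hng' w) /F hidem.
exact: hw.
Qed.

End Comb.

Local Close Scope complex_scope.
Local Open Scope ring_scope.

Theorem corollary3 (R : realType) (n : nat) (p : 'I_n -> bool -> bool -> R) :
  (3 <= n)%N -> quantum_behavior p -> ~ strongly_contextual p.
Proof.
move=> hn3 [hbeh [H [ip [e [rho [P [[hip hcomp _] hbasis [hlin hbnd hpos htr1] hi]]]]]]].
have hn : (0 < n)%N by apply: leq_trans hn3.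
move=> hsc; apply: hsc.
have hproj : forall i o, orth_projector ip (P i o) by move=> i o; case: (hi i) => h _ _ _; exact: h.
have hsum : forall i x, P i false x + P i true x = x by move=> i; case: (hi i).
have hcomm : forall i o o' x, P i o (P (ordS i) o' x) = P (ordS i) o' (P i o x).
  by move=> i; case: (hi i).
have hPlin : forall i o, linear_op (P i o) by move=> i o; case: (hproj i o).
have hidem : forall i o x, P i o (P i o x) = P i o x by move=> i o; case: (hproj i o).
have hsa : forall i o, self_adjoint ip (P i o) by move=> i o; case: (hproj i o).
apply: (comb hn hPlin hsum hcomm hidem).
- move=> i x y hnz.
  have [hge _] := hbeh i.
  rewrite lt0r hge andbT; apply/eqP => h0.
  have [_ _ _ htr] := hi i; have ht := htr x y; rewrite h0 in ht.
  pose A v := P i x (P (ordS i) y v).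
  have hA : linear_op A.
    by move=> a u w; rewrite /A (hPlin (ordS i) y) (hPlin i x).
  have hAA : forall v, A (A v) = A v.
    by move=> v; rewrite /A -(hcomm i x y) !hidem.
  have hAs : self_adjoint ip A.
    by move=> u w; rewrite /A (hsa i x) (hsa (ordS i) y) -(hcomm i x y).
  have hk := key hip hbasis hcomp hlin hbnd hpos htr1 hA hAA hAs ht.
  by case: hnz => v; apply; exact: hk v.
- apply: NNPP => h.
  have h0 : forall v, rho v = 0 by move=> v; apply: NNPP => hv; apply: h; exists v.
  have [hc _] := series_convC htr1.
  have [N hN] := hc 1 ltr01.
  have := hN N (leqnn N).
  rewrite big1; last by move=> k _; rewrite h0 (ip0r hip).
  by rewrite /= sub0r normrN normr1 ltxx.
Qed.
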